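(* For every positive integer $n$, the $n$th Catalan number $C_n=\frac{1}{n+1}\binom{2n}{n}$ equals the determinant $$C_n=\det\left(\binom{i+1}{j-i+1}\right)_{i,j=0}^{n-1},$$ i.e. the determinant of the $n\times n$ Hessenberg matrix whose row $i$ ($0\le i\le n-1$) contains the entries $\binom{i+1}{0},\binom{i+1}{1},\dots$ starting in column $i-1$ (so row $0$ is $(\binom{1}{1},0,\dots,0)$, row $1$ is $(\binom{2}{0},\binom{2}{1},\binom{2}{2},0,\dots)$, row $2$ is $(0,\binom{3}{0},\binom{3}{1},\binom{3}{2},\binom{3}{3},0,\dots)$, and the last row is $(0,\dots,0,\binom{n}{0},\binom{n}{1})$), all entries outside the matrix being truncated.
   Context: Convention: $\binom{a}{b}=0$ if $b<0$ or $b>a$ (for nonnegative integer $a$). Rows and columns are indexed from $0$ to $n-1$. *)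

(* Defs.v *)
From HB Require Import structures.
From mathcomp Require Import all_boot all_order all_algebra.
Set Implicit Arguments. Unset Strict Implicit. Unset Printing Implicit Defensive.
Import GRing.Theory.

(* n-th Catalan number C_n = binom(2n,n)/(n+1) (exact division in nat). *)
Definition catalan (n : nat) : nat := 'C(2 * n, n) %/ n.+1.

Definition binomz (a : nat) (b : int) : nat :=
  match b with
  | Posz k => 'C(a, k)
  | Negz _ => 0
  end.

Definition catalan_mx (n : nat) : 'M[int]_n :=
  \matrix_(i < n, j < n) (Posz (binomz i.+1 (Posz j - Posz i + 1)%R)).

(* Main.v *)
Require Import Defs.
From HB Require Import structures.
From mathcomp Require Import all_boot all_order all_algebra.
From mathcomp Require Import zify ring lra.
Import GRing.Theory Num.Theory.

Lemma catalanE k : catalan k * k.+1 = 'C(2 * k, k).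
Proof.
have h1 := mul_bin_left (2 * k) k.
have e : 'C(2*k,k) = k.+1 * ('C(2*k,k) - 'C(2*k,k.+1)).
  rewrite mulnBr h1 -mulnBl.
  have -> : k.+1 - (2 * k - k) = 1 by lia.
  by rewrite mul1n.
by rewrite /catalan {1}e mulKn // mulnC -e.
Qed.

Lemma catalanS k : (k + 2) * catalan k.+1 = 2 * (2 * k + 1) * catalan k.
Proof.
have A : (2*k+2) * 'C(2*k+1,k) = k.+1 * 'C(2*k+2,k.+1).
  have e : (2*k+2).-1 = 2*k+1 by lia.
  by have := mul_bin_diag (2*k+2) k; rewrite e.
have B : (2*k+1) * 'C(2*k,k) = k.+1 * 'C(2*k+1,k.+1).
  have e : (2*k+1).-1 = 2*k by lia.
  by have := mul_bin_diag (2*k+1) k; rewrite e.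
have S : 'C(2*k+1, k) = 'C(2*k+1, k.+1).
  rewrite -(bin_sub (n := 2*k+1) (m := k.+1)); last by lia.
  by congr 'C(_,_); lia.
have P1 : 'C(2*k+2, k.+1) = 2 * 'C(2*k+1, k.+1).
  apply/eqP; rewrite -(eqn_pmul2l (ltn0Sn k)) -A S.
  apply/eqP; rewrite (_ : 2*k+2 = 2*k.+1); [ring| lia].
have P2 : k.+1 * 'C(2*k+2, k.+1) = 2 * ((2*k+1) * 'C(2*k,k)).
  by rewrite P1 mulnCA B.
have C1 := catalanE k.+1. have C0 := catalanE k.
have e : 2 * k.+1 = 2 * k + 2 by lia.
rewrite e in C1.
apply/eqP; rewrite -(eqn_pmul2l (ltn0Sn k)) -(eqn_pmul2l (ltn0Sn k)).
apply/eqP.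
have -> : k.+1 * (k.+1 * ((k + 2) * catalan k.+1)) = k.+1 * ((catalan k.+1 * k.+2)) * k.+1.
  by rewrite addn2; ring.
rewrite C1 P2 -C0; ring.
Qed.

Lemma binid k i : (k+i+1)*(k+i+2)*'C(k.+1,i.+1) =
   2*(2*k+1)*(k.+1*'C(k,i)) + k*(k.+1 * 'C(k.-1,i.+1)).
Proof.
have h1 : k.+1 * 'C(k,i) = i.+1 * 'C(k.+1,i.+1) by exact: mul_bin_diag.
have h2 : k * 'C(k.-1,i.+1) = (k - i.+1) * 'C(k,i.+1) by exact: mul_bin_down.
have h3 : k.+1 * 'C(k,i.+1) = (k.+1 - i.+1) * 'C(k.+1,i.+1) by exact: mul_bin_down.
rewrite h1 (mulnCA k) h2 (mulnCA k.+1) h3.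
case: (leqP i k) => hik.
  have [d ->] : exists d, k = i + d by exists (k - i); lia.
  have e1 : i + d - i.+1 = d.-1 by lia.
  have e2 : (i + d).+1 - i.+1 = d by lia.
  rewrite e1 e2.
  case: d {e1 e2 hik} => [|d] /=; set X := 'C(_,_); ring.
by rewrite bin_small ?muln0 ?addn0 //; lia.
Qed.

Lemma coreid k i : (k+i+1)*(k+i+2)*'C(k.+1,i.+1) * catalan k =
   k.+1*k.+2*'C(k,i)*catalan k.+1 + k*k.+1*'C(k.-1,i.+1)*catalan k.
Proof.
have hc := catalanS k.
have -> : k.+1*k.+2*'C(k,i)*catalan k.+1 = (k.+1 * 'C(k,i)) * ((k+2) * catalan k.+1).
  rewrite -addn2; ring.
rewrite hc binid; ring.
Qed.
Local Open Scope ring_scope.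


Definition Hm (a : nat -> nat -> int) m : 'M[int]_m := \matrix_(i < m, j < m) a i j.
Definition Fm (a : nat -> nat -> int) m (v : nat -> int) : 'M[int]_m :=
  \matrix_(i < m, j < m) if (val j).+1 == m then v i else a i j.

Lemma F_rec (a : nat -> nat -> int) (ha0 : forall i j, (j.+1 < i)%N -> a i j = 0) (ha1 : forall j, a j.+1 j = 1) m v : \det (Fm a m.+2 v) = v m.+1 * \det (Hm a m.+1) - \det (Fm a m.+1 v).
Proof.
rewrite (expand_det_row _ ord_max) !big_ord_recr /=.
rewrite big1 ?add0r; last first.
  move=> j _; rewrite !mxE /=; have hj := ltn_ord j.
  rewrite ifF; last by apply/negbTE; rewrite eqSS; apply/eqP; lia.
  by rewrite ha0 ?mul0r //; lia.
rewrite !mxE /= eqxx.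
rewrite ifF; last by apply/negbTE; apply/eqP; lia.
rewrite ha1 mul1r /cofactor.
have -> : row' ord_max (col' (widen_ord (leqnSn m.+1) ord_max) (Fm a m.+2 v)) = Fm a m.+1 v.
  apply/matrixP => i [j hj0]; rewrite !mxE lift_max /=.
  rewrite /bump; case: (ltngtP m j) => hj.
  - lia.
  - by rewrite add0n; case: eqP => h1; case: eqP => h2 //; lia.
  - by rewrite add1n -hj !eqxx.
have -> : row' ord_max (col' ord_max (Fm a m.+2 v)) = Hm a m.+1.
  apply/matrixP => i [j hj0]; rewrite !mxE !lift_max /=.
  case: eqP => h1 //; rewrite /bump leqNgt hj0 add0n in h1; lia.
have e1 : (m.+1 + m)%N = (2 * m).+1 by lia.
have e2 : (m.+1 + m.+1)%N = (2 * m.+1)%N by lia.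
rewrite /= e1 e2 exprS !exprM sqrrN !expr1n; ring.
Qed.

Lemma F_sum (a : nat -> nat -> int) (ha0 : forall i j, (j.+1 < i)%N -> a i j = 0) (ha1 : forall j, a j.+1 j = 1) m v : \det (Fm a m.+1 v) = \sum_(k < m.+1) (-1) ^+ (m - k) * v k * \det (Hm a k).
Proof.
elim: m v => [|m IH] v.
  rewrite det_mx11 big_ord1 det_mx00 !mxE /= mulr1 mul1r; by [].
rewrite F_rec // IH [RHS]big_ord_recr /= subnn expr0 mul1r addrC; congr (_ + _).
rewrite -sumrN; apply: eq_bigr => k _ /=.
by rewrite subSn ?exprS ?mulN1r ?mulNr //; have := ltn_ord k; lia.
Qed.

Lemma H_rec (a : nat -> nat -> int) (ha0 : forall i j, (j.+1 < i)%N -> a i j = 0) (ha1 : forall j, a j.+1 j = 1) m : \det (Hm a m.+1) = \sum_(k < m.+1) (-1) ^+ (m - k) * a k m * \det (Hm a k).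
Proof.
rewrite -(@F_sum a ha0 ha1 m (fun i => a i m)); congr (\det _).
apply/matrixP => i j; rewrite !mxE.
case: eqP => // e; congr (a _ _); exact: (succn_inj e).
Qed.

Definition tt (N k : nat) : int := (-1) ^+ (N - k) * Posz ('C(k.+1, N - k) * catalan k)%N.

Lemma tele N K : (K < N)%N ->
  Posz (N * N.+1)%N * \sum_(k < K.+1) tt N k =
  (-1) ^+ (N - K) * Posz (K.+1 * K.+2 * 'C(K, N - K.+1) * catalan K.+1)%N.
Proof.
elim: K => [|K IH] hK.
  rewrite big_ord1 /tt subn0 mulrCA; congr (_ * _); rewrite -PoszM; congr Posz.
  have [i ->] : exists i, N = i.+1 by exists N.-1; lia.
  have := coreid 0 i; rewrite /= subSS subn0 muln0 mul0n addn0 => <-.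
  rewrite !mulnA; congr (_ * _ * _ * _)%N; lia.
rewrite big_ord_recr mulrDr IH; last by lia.
have [i ->] : exists i, N = (K + i + 2)%N by exists (N - K - 2)%N; lia.
have e1 : (K + i + 2 - K = i.+2)%N by lia.
have e2 : (K + i + 2 - K.+1 = i.+1)%N by lia.
have e3 : (K + i + 2 - K.+2 = i)%N by lia.
rewrite /tt /= e1 e2 e3.
have E := coreid K.+1 i.
have E' : ((K + i + 2) * (K + i + 2).+1 * ('C(K.+2, i.+1) * catalan K.+1) =
   K.+2 * K.+3 * 'C(K.+1, i) * catalan K.+2 + K.+1 * K.+2 * 'C(K, i.+1) * catalan K.+1)%N.
  rewrite mulnA; move: E; rewrite /=.
  have -> : (K.+1 + i + 1 = K + i + 2)%N by lia.
  have -> : (K.+1 + i + 2 = (K + i + 2).+1)%N by lia.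
  by [].
rewrite mulrCA -PoszM E' PoszD exprS; ring.
Qed.

Lemma sumzero M : \sum_(k < M.+2) tt M.+1 k = 0.
Proof.
have T := tele M.+1 M (leqnn M.+1).

have h : Posz (M.+1 * M.+2)%N != 0 by [].
apply/eqP; rewrite -(mulrI_eq0 _ (lregP h)) big_ord_recr /= mulrDr T.
rewrite /tt subSn // !subnn expr1 expr0 !bin0 !muln1 mul1r.
apply/eqP; rewrite -PoszM mulnA; ring.
Qed.

Lemma catrec m : Posz (catalan m.+1) =
  \sum_(k < m.+1) (-1) ^+ (m - k) * Posz ('C(k.+1, (m - k).+1) * catalan k)%N.
Proof.
have S := sumzero m.
rewrite big_ord_recr /= /tt subnn expr0 bin0 mul1n mul1r in S.
move/eqP: S; rewrite addrC addr_eq0 => /eqP ->.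
rewrite -sumrN; apply: eq_bigr => k _ /=.
have hk := ltn_ord k.
by rewrite subSn // exprS mulN1r mulNr opprK.
Qed.

Definition acat (i j : nat) : int := Posz (binomz i.+1 (Posz j - Posz i + 1)).

Lemma acat0 i j : (j.+1 < i)%N -> acat i j = 0.
Proof.
move=> h; rewrite /acat.
have [k ->] : exists k, (Posz j - Posz i + 1 = Negz k) by exists (i - j - 2)%N; rewrite NegzE; lia.
by [].
Qed.

Lemma acat1 j : acat j.+1 j = 1.
Proof. by rewrite /acat (_ : Posz j - Posz j.+1 + 1 = Posz 0) ?bin0 //; lia. Qed.

Lemma acatE k m : (k <= m)%N -> acat k m = Posz 'C(k.+1, (m - k).+1).
Proof. by move=> h; rewrite /acat (_ : Posz m - Posz k + 1 = Posz (m - k).+1) //; lia. Qed.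

Lemma detH n : \det (Hm acat n) = Posz (catalan n).
Proof.
elim: n {-2}n (leqnn n) => [|n IH] k hk.
  by rewrite leqn0 in hk; move/eqP: hk => ->; rewrite det_mx00.
case: k hk => [|m] hm.
  by rewrite det_mx00.
rewrite (@H_rec acat acat0 acat1) catrec; apply: eq_bigr => k _.
have hk := ltn_ord k.
rewrite acatE // IH; last by lia.
by rewrite PoszM mulrA.
Qed.

Theorem theorem1 (n : nat) (hn : (0 < n)%N) :
  (Posz (catalan n) = \det (catalan_mx n))%R.
Proof.
rewrite -detH; congr (\det _); apply/matrixP => i j; rewrite !mxE; by [].
Qed.
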